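(* Let $a_{1}<a_{2}<a_{3}<\cdots$ be a strictly increasing infinite sequence of positive integers, let $A=\{a_{1},a_{2},a_{3},\ldots\}$, and let $n>0$ be an integer such that: (1) whenever $m>n$, there exist indices $i<r\leq s<j$ with $a_{m}=a_{i}+a_{j}=a_{r}+a_{s}$; and (2) whenever $a=a_{i}+a_{j}=a_{r}+a_{s}>a_{n}$ for some indices $i<r<s<j$, then $a=a_{m}$ for some $m>n$. Suppose $d,a,b$ are integers such that the five numbers $d,a,b,a+d,b+d$ are pairwise distinct and all belong to $A$, and suppose $a_{n}<k$ where $k=a+b+d$. Then every positive multiple of $k$ belongs to $A$, i.e., $mk\in A$ for all integers $m\geq 1$. *)

(* Defs.v *)
(* Plain MathComp (ssrnat). Sequences are 1-indexed: a : nat -> nat, only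
   indices i >= 1 are meaningful; a 0 is ignored. *)
From mathcomp Require Import all_boot.
Set Implicit Arguments. Unset Strict Implicit. Unset Printing Implicit Defensive.

Definition strictly_increasing_pos (a : nat -> nat) : Prop :=
  (forall i, 1 <= i -> 0 < a i) /\ (forall i j, 1 <= i -> i < j -> a i < a j).

Definition inA (a : nat -> nat) (x : nat) : Prop := exists i, 1 <= i /\ a i = x.

Definition cond1 (a : nat -> nat) (n : nat) : Prop :=
  forall m, n < m -> exists i r s j,
    [/\ 1 <= i, i < r, r <= s, s < j & a m = a i + a j /\ a m = a r + a s].

Definition cond2 (a : nat -> nat) (n : nat) : Prop :=
  forall i r s j, 1 <= i -> i < r -> r < s -> s < j ->
    a i + a j = a r + a s -> a n < a i + a j ->
    exists m, n < m /\ a m = a i + a j.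

(* Main.v *)
Require Import Defs.
From mathcomp Require Import all_boot.
From mathcomp Require Import zify.

Lemma mono_idx (a : nat -> nat) i j : strictly_increasing_pos a ->
  1 <= i -> 1 <= j -> a i < a j -> i < j.
Proof.
move=> [_ H] hi hj hl; case: (ltnP i j) => // hji.
move: hji; rewrite leq_eqVlt => /orP [/eqP E|E].
  by subst; rewrite ltnn in hl.
by have := H _ _ hj E; lia.
Qed.

Lemma gen (a : nat -> nat) n p q r s : strictly_increasing_pos a -> cond2 a n ->
  inA a p -> inA a q -> inA a r -> inA a s -> p < q -> q < r -> r < s ->
  p + s = q + r -> a n < p + s -> inA a (p + s).
Proof.
move=> Ha H2 [i [hi <-]] [ri [hri <-]] [si [hsi <-]] [j [hj <-]] l1 l2 l3 E l4.
have o1 := @mono_idx a _ _ Ha hi hri l1.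
have o2 := @mono_idx a _ _ Ha hri hsi l2.
have o3 := @mono_idx a _ _ Ha hsi hj l3.
have [m [hm <-]] := H2 i ri si j hi o1 o2 o3 E l4.
exists m; split => //; lia.
Qed.

Lemma posA a z : strictly_increasing_pos a -> inA a z -> 0 < z.
Proof. by move=> [H _] [i [hi <-]]; apply: H. Qed.

Lemma core (a : nat -> nat) (n d x y : nat) :
  strictly_increasing_pos a -> cond2 a n -> x < y -> y <> x + d ->
  inA a d -> inA a x -> inA a y -> inA a (x + d) -> inA a (y + d) ->
  a n < x + y + d ->
  forall m, 1 <= m -> inA a (m * (x + y + d)) /\ inA a (m * (x + y + d) + d).
Proof.
move=> Ha H2 xy yxd hd hx hy hxd hyd hk.
have pd := @posA a _ Ha hd; have px := @posA a _ Ha hx; have py := @posA a _ Ha hy.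
set k := x + y + d.
have Kk : inA a k.
  have [lt|lt] : y < x + d \/ x + d < y by lia.
    have := @gen a n _ _ _ _ Ha H2 hx hy hxd hyd; rewrite /k.
    have -> : x + (y + d) = x + y + d by lia.
    apply; lia.
  have := @gen a n _ _ _ _ Ha H2 hx hxd hy hyd; rewrite /k.
  have -> : x + (y + d) = x + y + d by lia.
  apply; lia.
have Kkd : inA a (k + d).
  have := @gen a n _ _ _ _ Ha H2 hd hxd hyd Kk; rewrite /k.
  have -> : d + (x + y + d) = x + y + d + d by lia.
  apply; rewrite /k; lia.
have step : forall c, k <= c -> inA a c -> inA a (c + d) ->
    inA a (c + k) /\ inA a (c + k + d).
  move=> c hc hc1 hc2.
  have h3 : inA a (c + x + d).
    have := @gen a n _ _ _ _ Ha H2 hx hxd hc1 hc2.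
    have -> : x + (c + d) = c + x + d by lia.
    apply; rewrite /k in hc *; lia.
  have h4 : inA a (c + y + d).
    have := @gen a n _ _ _ _ Ha H2 hy hyd hc1 hc2.
    have -> : y + (c + d) = c + y + d by lia.
    apply; rewrite /k in hc *; lia.
  split.
    have := @gen a n _ _ _ _ Ha H2 hx hy h3 h4.
    have -> : x + (c + y + d) = c + k by rewrite /k; lia.
    apply; rewrite /k in hc *; lia.
  have := @gen a n _ _ _ _ Ha H2 hxd hyd h3 h4.
  have -> : x + d + (c + y + d) = c + k + d by rewrite /k; lia.
  apply; rewrite /k in hc *; lia.
elim=> [//|m IH] _.
case: m IH => [|m] IH; first by rewrite mul1n.
have [h1 h2] := IH isT.
have hc : k <= m.+1 * k by rewrite leq_pmull.
by rewrite mulSnr; apply: step.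
Qed.

Theorem lemma1 (a : nat -> nat) (n d x y : nat) :
  strictly_increasing_pos a -> 0 < n -> cond1 a n -> cond2 a n ->
  uniq [:: d; x; y; x + d; y + d] ->
  inA a d -> inA a x -> inA a y -> inA a (x + d) -> inA a (y + d) ->
  a n < x + y + d ->
  forall m, 1 <= m -> inA a (m * (x + y + d)).
Proof.
move=> Ha _ _ H2 Hu hd hx hy hxd hyd hk m hm.
move: Hu; rewrite /= !inE !negb_or => /andP [/and4P [_ _ _ _]] /andP [/and3P [e1 e2 e3]] /andP [/andP [e4 e5]] _.
have [lt|lt] : x < y \/ y < x by lia.
  by case: (@core a n d x y Ha H2 lt _ hd hx hy hxd hyd hk m hm) => //; lia.
have hk' : a n < y + x + d by lia.
have [] := @core a n d y x Ha H2 lt _ hd hy hx hyd hxd hk' m hm; first lia.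
by have -> : y + x + d = x + y + d by lia.
Qed.
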